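(* Let $N$ be a nonnegative integer random variable with $E[N]<\infty$ and let $p<1$. Let $\mathbf N=(N_i)_{i\in\mathbb{Z}}$ be i.i.d. with law $N$, and let each bond $(i,i+n)$, $1\le n\le N_i$, be open independently with probability $p$. Let $A$ be the event that there exist $i\ge1$ and $j\ge0$ such that $(-i,j)$ is a bond of $G_{\mathbf N}$ (i.e. $i+j\le N_{-i}$) and it is open. Then $P(A)<1$.
   Context: $G_{\mathbf N}$ is the oriented graph on $\mathbb{Z}$ with bonds $\{(i,i+n):i\in\mathbb{Z},\ 1\le n\le N_i\}$; given $\mathbf N$, bonds are open independently with probability $p$. *)

(* Defs.v *)
From HB Require Import structures.
From mathcomp Require Import all_boot all_order all_algebra.
From mathcomp Require Import all_classical all_reals all_analysis.
Set Implicit Arguments. Unset Strict Implicit. Unset Printing Implicit Defensive.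
Import Order.TTheory GRing.Theory Num.Theory.
Local Open Scope classical_set_scope.
Local Open Scope ring_scope.

Definition indep_discrete d (T : measurableType d) (R : realType)
  (P : probability T R) (I : eqType) (D : pred I) (X : I -> T -> nat) : Prop :=
  forall (F : seq I) (x : I -> nat), uniq F -> all D F ->
    P (\bigcap_(i in [set` F]) (X i @^-1` [set x i]))
    = (\big[*%E/1%E]_(i <- F) P (X i @^-1` [set x i]))%E.

(* Index set of the joint family: inl i <-> N_i ; inr (i, n) <-> bond (i, i+n). *)
Definition perc_index := (int + (int * nat))%type.

Definition perc_admissible : pred perc_index :=
  fun k => match k with inl _ => true | inr (_, n) => (0 < n)%N end.

Definition perc_family (T : Type) (Nv : int -> T -> nat)
  (op : int -> nat -> T -> bool) : perc_index -> T -> nat :=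
  fun k => match k with
           | inl i => Nv i
           | inr (i, n) => fun w => nat_of_bool (op i n w)
           end.

Definition crossing_event (T : Type) (Nv : int -> T -> nat)
  (op : int -> nat -> T -> bool) : set T :=
  [set w | exists i j : nat, (1 <= i)%N /\ (i + j <= Nv (- (i%:Z)) w)%N
                              /\ op (- (i%:Z)) (i + j)%N w].

(* Main.v *)
Require Import Defs.
From HB Require Import structures.
From mathcomp Require Import all_boot all_order all_algebra.
From mathcomp Require Import all_classical all_reals all_analysis.
From mathcomp Require Import lra zify.
Import Order.TTheory GRing.Theory Num.Theory.
Local Open Scope classical_set_scope.
Local Open Scope ring_scope.

Lemma set_seq_cons (I : eqType) (x : I) (s : seq I) :
  [set` (x :: s)] = x |` [set` s].
Proof.
apply/seteqP; split => y /=; rewrite /= inE.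
  by case/orP => [/eqP ->|ys]; [left|right].
by case => [->|ys]; rewrite ?eqxx ?ys ?orbT.
Qed.

Lemma pf_meas d (T : measurableType d) (Nv : int -> T -> nat)
  (op : int -> nat -> T -> bool)
  (hNmeas : forall i k, measurable (Nv i @^-1` [set k]))
  (hopmeas : forall i n, measurable (op i n @^-1` [set true])) j v :
  measurable (perc_family Nv op j @^-1` [set v]).
Proof.
case: j => [i|[i n]] /=; first exact: hNmeas.
case: v => [|[|v]].
- have -> : (fun w => nat_of_bool (op i n w)) @^-1` [set 0%N]
      = ~` (op i n @^-1` [set true]).
    by apply/seteqP; split => w /=; case: (op i n w).
  exact: measurableC.
- have -> : (fun w => nat_of_bool (op i n w)) @^-1` [set 1%N]
      = (op i n @^-1` [set true]).
    by apply/seteqP; split => w /=; case: (op i n w).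
  exact: hopmeas.
- have -> : (fun w => nat_of_bool (op i n w)) @^-1` [set v.+2]
      = set0.
    by apply/seteqP; split => w /=; case: (op i n w).
  exact: measurable0.
Qed.

Lemma pf_false d (T : measurableType d) (R : realType) (P : probability T R)
  (op : int -> nat -> T -> bool) (Nv : int -> T -> nat) p
  (hopmeas : forall i n, measurable (op i n @^-1` [set true]))
  (hbern : forall i n, (0 < n)%N -> P (op i n @^-1` [set true]) = p%:E) i n :
  (0 < n)%N ->
  P (perc_family Nv op (inr (i, n)) @^-1` [set 0%N]) = (1 - p)%:E.
Proof.
move=> n0.
have -> : perc_family Nv op (inr (i, n)) @^-1` [set 0%N]
      = ~` (op i n @^-1` [set true]).
  by apply/seteqP; split => w /=; case: (op i n w).
by rewrite probability_setC ?hbern // EFinB.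
Qed.

Lemma prod_gt0 (R : realType) (I : Type) (s : seq I) (f : I -> \bar R) (Q : pred I) :
  all Q s -> (forall j, Q j -> (0 < f j)%E) -> (0 < \big[*%E/1%E]_(j <- s) f j)%E.
Proof.
move=> + hf; elim: s => [|j s IH]; first by rewrite big_nil lte01.
by rewrite big_cons /= => /andP[qj qs]; apply: mule_gt0; [exact: hf|exact: IH].
Qed.

Theorem mainTheorem7 (d : measure_display) (T : measurableType d) (R : realType)
  (P : probability T R) (Nv : int -> T -> nat) (op : int -> nat -> T -> bool)
  (p : R) (hp0 : 0 <= p) (hp1 : p < 1)
  (hNmeas : forall i k, measurable (Nv i @^-1` [set k]))
  (hopmeas : forall i n, measurable (op i n @^-1` [set true]))
  (hident : forall i k, P (Nv i @^-1` [set k]) = P (Nv 0 @^-1` [set k]))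
  (hmean : (\sum_(0 <= k <oo) ((k%:R : R)%:E * P (Nv 0%R @^-1` [set k]))%E < +oo)%E)
  (hbern : forall i n, (0 < n)%N -> P (op i n @^-1` [set true]) = p%:E)
  (hindep : indep_discrete P perc_admissible (perc_family Nv op)) :
  (P (crossing_event Nv op) < 1)%E.
Proof.
pose q k := fine (P (Nv 0 @^-1` [set k])).
have hq z k : P (Nv z @^-1` [set k]) = (q k)%:E.
  rewrite hident /q fineK // ge0_fin_numE ?measure_ge0 //.
  by apply: (le_lt_trans (probability_le1 _ (hNmeas _ _))); rewrite ltry.
have q0 k : 0 <= q k by rewrite -lee_fin -(hq 0) measure_ge0.
have [k0 hk0] : exists k0, 0 < q k0.
  apply: contrapT => /forallNP hne.
  have qz k : q k = 0 by apply/eqP; rewrite eq_le q0 andbT leNgt; apply/negP/hne.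
  have := probability_setT P.
  have -> : [set: T] = \bigcup_(k in setT) (Nv 0 @^-1` [set k]).
    by apply/seteqP; split => w // _; exists (Nv 0 w).
  rewrite measure_bigcup //; last first.
    by move=> a b _ _ [w [/= <- <-]].
  rewrite eseries0 //; last by move=> k _ _ /=; rewrite (hq 0%R) qz.
  by move=> /esym/eqP; rewrite onee_eq0.
pose f k := ((k%:R : R)%:E * P (Nv 0%R @^-1` [set k]))%E.
have f0 k : (0 <= f k)%E by rewrite /f mule_ge0 // lee_fin.
have htail := @nneseries_tail_cvg R f xpredT hmean (fun k _ => f0 k).
have [M _ HM] : \forall N \near \oo,
    (\sum_(N <= k <oo) f k)%E \is a fin_num /\ fine (\sum_(N <= k <oo) f k)%E < 1.
  move/fine_cvgP : htail => [hfin hc].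
  have := cvgr_lt 0 hc 1 ltr01.
  by move=> h2; near=> N; split; [near: N; exact: hfin|near: N; exact: h2].
have [tfin tlt1] := HM M.+1 (leqnSn M).
set t := (\sum_(M.+1 <= k <oo) f k)%E in tfin tlt1.
pose F0 : seq perc_index := [seq inl (- (i%:Z)) | i <- iota 1 M] ++
   [seq inr (- (i%:Z), n) | i <- iota 1 M, n <- iota 1 k0].
pose xv (o : option (int * nat)) (j : perc_index) : nat :=
  match j with
  | inl z' => match o with Some (z, k) => if z' == z then k else k0 | None => k0 end
  | inr _ => 0%N end.
pose D := \bigcap_(j in [set` F0]) (perc_family Nv op j @^-1` [set xv None j]).
have negz_inj : injective (fun i : nat => - (i%:Z)).
  by move=> a b /= /oppr_inj [].
have F0uniq : uniq F0.
  rewrite cat_uniq; apply/and3P; split.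
  - by rewrite map_inj_uniq ?iota_uniq // => a b [] /negz_inj.
  - apply/hasPn => x /allpairsP [[a b] [_ _ ->]] /=.
    by apply/negP => /mapP [c _].
  - apply: allpairs_uniq; rewrite ?iota_uniq //.
    by move=> [a b] [c e] _ _ /= [/negz_inj -> ->].
have F0adm : all perc_admissible F0.
  rewrite all_cat; apply/andP; split; first by apply/allP => x /mapP [c _ ->].
  apply/allP => x /allpairsP [[a b] [_ /= hb ->]] /=.
  by move: hb; rewrite mem_iota => /andP[].
have Dmeas : measurable D.
  apply: fin_bigcap_measurable; first exact: finite_seq.
  by move=> j _; exact: pf_meas.
have PDprod : P D = (\big[*%E/1%E]_(j <- F0) P (perc_family Nv op j @^-1` [set xv None j]))%E.
  exact: hindep.
have PDgt0 : (0 < P D)%E.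
  rewrite PDprod; apply: (@prod_gt0 R _ F0 (fun j => P (perc_family Nv op j @^-1` [set xv None j])) perc_admissible F0adm) => -[z|[z n]] /=.
    by rewrite hq lte_fin.
  by move=> n0; rewrite (@pf_false _ _ _ P op Nv p hopmeas hbern) // lte_fin subr_gt0.
pose pd := fine (P D).
have PDE : P D = pd%:E.
  rewrite /pd fineK // ge0_fin_numE ?measure_ge0 //.
  by apply: (le_lt_trans (probability_le1 _ Dmeas)); rewrite ltry.
have pd_gt0 : 0 < pd by rewrite -lte_fin -PDE.
have pd_le1 : pd <= 1 by rewrite -lee_fin -PDE probability_le1.
have Dext i k : (M < i)%N ->
    P (Nv (- (i%:Z)) @^-1` [set k] `&` D) = ((q k)%:E * P D)%E.
  move=> Mi.
  have notin : inl (- (i%:Z)) \notin F0.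
    rewrite mem_cat negb_or; apply/andP; split.
    - apply/mapP => -[c]; rewrite mem_iota => /andP[_ hc] [/negz_inj ci].
      by move: hc; rewrite -ci add1n ltnS leqNgt Mi.
    - by apply/negP => /allpairsP [[a b] [_ _]].
  have agree j : j \in F0 -> xv (Some (- (i%:Z), k)) j = xv None j.
    case: j => [z|[z n]] //= hj; case: eqP => // ez.
    by rewrite -ez hj in notin.
  have H := hindep (inl (- (i%:Z)) :: F0) (xv (Some (- (i%:Z), k))).
  rewrite /= notin F0uniq F0adm /= in H.
  have {}H := H erefl erefl.
  rewrite set_seq_cons bigcap_setU1 big_cons /= eqxx in H.
  rewrite hq in H.
  rewrite PDprod; rewrite (eq_big_seq (fun j => P (perc_family Nv op j @^-1` [set xv None j]))) in H; last first.
    by move=> j hj; rewrite agree.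
  rewrite -H; congr (P (_ `&` _)).
  by apply: eq_bigcapr => j /= hj; rewrite agree.
pose G i k := if ((M < i) && (i <= k))%N then Nv (- (i%:Z)) @^-1` [set k] `&` D else set0.
have Gmeas i k : measurable (G i k).
  by rewrite /G; case: ifP => _; [apply: measurableI|exact: measurable0].
pose B := \bigcup_i \bigcup_k G i k.
have Bmeas : measurable B.
  by apply: bigcup_measurable => i _; apply: bigcup_measurable => k _.
pose H i j k := if ((1 <= i) && (i + j <= k))%N then
  Nv (- (i%:Z)) @^-1` [set k] `&` op (- (i%:Z)) (i + j) @^-1` [set true] else set0.
have Aeq : crossing_event Nv op = \bigcup_i \bigcup_j \bigcup_k H i j k.
  apply/seteqP; split => w /=.
  - move=> [i [j [i1 [hle hop]]]]; exists i => //; exists j => //.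
    by exists (Nv (- (i%:Z)) w) => //; rewrite /H i1 hle.
  - move=> [i _ [j _ [k _]]]; rewrite /H; case: ifP => // /andP[i1 hle] [/= hk hop].
    by exists i, j; rewrite hk.
have Ameas : measurable (crossing_event Nv op).
  rewrite Aeq; apply: bigcup_measurable => i _; apply: bigcup_measurable => j _.
  apply: bigcup_measurable => k _; rewrite /H; case: ifP => _.
    exact: measurableI.
  exact: measurable0.
have Asub : crossing_event Nv op `<=` ~` D `|` B.
  move=> w [i [j [i1 [hle hop]]]].
  case: (pselect (D w)) => Dw; last by left.
  right.
  have memD j0 : j0 \in F0 -> perc_family Nv op j0 w = xv None j0.
    by move=> h; exact: (Dw j0 h).
  case: (leqP i M) => hiM.
    exfalso.
    have h1 := memD (inl (- (i%:Z))).
    rewrite mem_cat map_f /= ?mem_iota in h1; last by rewrite i1 add1n ltnS hiM.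
    have {}h1 := h1 erefl.
    have h2 := memD (inr (- (i%:Z), (i + j)%N)).
    rewrite mem_cat /= in h2.
    have h3 : (inr (- (i%:Z), (i + j)%N) : perc_index) \in
       [seq inr (- (i0%:Z), n) | i0 <- iota 1 M, n <- iota 1 k0].
      rewrite h1 in hle.
      apply/allpairsP; exists (i, (i + j)%N); rewrite !mem_iota /=; split => //.
        by rewrite i1 add1n ltnS hiM.
      by rewrite add1n ltnS hle andbT ltn_addr.
    by rewrite h3 orbT hop in h2; have := h2 erefl.
  exists i => //; exists (Nv (- (i%:Z)) w) => //.
  by rewrite /G hiM /= (leq_trans (leq_addr j i) hle).
pose a i k := if ((M < i) && (i <= k))%N then q k else 0.
have a0 i k : 0 <= a i k by rewrite /a; case: ifP.
have PG i k : P (G i k) = ((a i k)%:E * P D)%E.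
  rewrite /G /a; case: ifP => [/andP[Mi _]|_]; first exact: Dext.
  by rewrite measure0 mul0e.
have PB : (P B <= pd%:E * \sum_(i <oo) \sum_(k <oo) (a i k)%:E)%E.
  apply: (le_trans (measure_sigma_subadditive P (F := fun i => \bigcup_k G i k) _ Bmeas _)).
  - by move=> i; apply: bigcup_measurable => k _; exact: Gmeas.
  - by [].
  rewrite -nneseriesZl; last by move=> i _; apply: nneseries_ge0 => k _ _; rewrite lee_fin.
  apply: lee_nneseries => [i _ _|i _]; first exact: measure_ge0.
  apply: (le_trans (measure_sigma_subadditive P (F := G i) _ _ _)) => //.
    by apply: bigcup_measurable => k _; exact: Gmeas.
  rewrite -nneseriesZl; last by move=> k _; rewrite lee_fin.
  apply: lee_nneseries => [k _ _|k _]; first exact: measure_ge0.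
  rewrite le_eqVlt; apply/orP; left; apply/eqP.
  transitivity ((a i k)%:E * P D)%E; first exact: PG.
  by rewrite PDE muleC.
have Sa : (\sum_(i <oo) \sum_(k <oo) (a i k)%:E <= t)%E.
  rewrite nneseries_interchange; last by move=> i k; rewrite lee_fin.
  rewrite /t [X in (_ <= X)%E]eseries_cond [X in (_ <= X)%E]eseries_mkcond.
  apply: lee_nneseries => [k _ _|k _]; first by apply: nneseries_ge0 => i _ _; rewrite lee_fin.
  rewrite (nneseries_split 0 k.+1); last by move=> i _; rewrite lee_fin.
  rewrite add0n (@eseries0 _ _ k.+1 xpredT); last first.
    by move=> i hi _; rewrite /a; case: ifP => // /andP[_ ik]; rewrite ltnNge ik in hi.
  rewrite adde0 sumEFin /f /=.
  case: (ltnP M k) => hMk.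
    rewrite (hq 0) -EFinM lee_fin.
    apply: (@le_trans _ _ (\sum_(0 <= i < k.+1) (if (0 < i)%N then q k else 0))).
      apply: ler_sum => i _; rewrite /a; case: ifP => [/andP[Mi _]|_].
        by rewrite (leq_ltn_trans (leq0n M) Mi).
      by case: ifP.
    rewrite big_nat_recl // /= add0r (eq_bigr (fun _ => q k)) // sumr_const_nat subn0.
    by rewrite mulr_natl.
  rewrite big1 ?lexx // => i _; rewrite /a; case: ifP => // /andP[Mi ik].
  by have := leq_trans ik hMk; rewrite leqNgt Mi.
have PB' : (P B <= (pd * fine t)%:E)%E.
  apply: (le_trans PB); rewrite EFinM (fineK tfin).
  apply: lee_wpmul2l => //.
  by rewrite lee_fin ltW.
have HA : (P (crossing_event Nv op) <= (1 - pd + pd * fine t)%:E)%E.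
  apply: (le_trans (le_measure P (mem_set Ameas) (mem_set (measurableU _ _ (measurableC Dmeas) Bmeas)) Asub)).
  apply: (le_trans (measureU2 P (measurableC Dmeas) Bmeas)).
  have PC : P (~` D) = (1 - pd)%:E by rewrite probability_setC // PDE EFinB.
  apply: (@le_trans _ _ ((1 - pd)%:E + P B)%E).
    rewrite le_eqVlt; apply/orP; left; apply/eqP; congr (_ + _)%E; exact: PC.
  apply: (le_trans (leeD2l _ PB')).
  by rewrite -EFinD.
apply: (le_lt_trans HA); rewrite lte_fin.
nra.
Unshelve. all: try by end_near.
Qed.
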